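(* Let $\mathbb{K}$ be a field of characteristic zero, let $p,q\in\mathbb{Z}^n_{\ge0}$ be nonzero vectors and let $\beta,\gamma\in\mathbb{K}^n$ be non-proportional vectors. If the derivations $\Delta^p_\beta$ and $\Delta^q_\gamma$ of $\mathbb{K}[x_1,\ldots,x_n]$ generate a finite dimensional Lie algebra, then there exists $r\in\mathbb{Z}_{\ge0}$ such that $\langle\beta,rp+q\rangle=0$.
   Context: For $p\in\mathbb{Z}^n_{\ge0}$ and $\beta\in\mathbb{K}^n$, $\Delta^p_\beta:=x_1^{p_1}\cdots x_n^{p_n}\sum_{j=1}^n\beta_jx_j\partial_j$, where $\partial_j=\partial/\partial x_j$. $\langle\beta,u\rangle:=\sum_i\beta_iu_i$. The Lie bracket is the commutator of derivations. *)

(* Defs.v *)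
From HB Require Import structures.
From mathcomp Require Import all_boot all_order all_algebra.
From mathcomp Require Import mpoly.
Set Implicit Arguments. Unset Strict Implicit. Unset Printing Implicit Defensive.
Import GRing.Theory.
Local Open Scope ring_scope.

Definition op (K : fieldType) (n : nat) := {mpoly K[n]} -> {mpoly K[n]}.

Definition Delta (K : fieldType) (n : nat) (p : 'X_{1..n}) (beta : 'I_n -> K)
  : op K n :=
  fun f => 'X_[p] * \sum_(j < n) (beta j *: ('X_j * f^`M(j))).

Definition lie_br (K : fieldType) (n : nat) (D E : op K n) : op K n :=
  fun f => D (E f) - E (D f).

(* Iterated brackets of D1 and D2; the Lie algebra generated by D1, D2 is
   the K-linear span of these. *)
Inductive lie_word (K : fieldType) (n : nat) (D1 D2 : op K n) : op K n -> Prop :=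
| lw_left : lie_word D1 D2 D1
| lw_right : lie_word D1 D2 D2
| lw_br : forall A B, lie_word D1 D2 A -> lie_word D1 D2 B ->
          lie_word D1 D2 (lie_br A B).

Definition gen_lie_fin_dim (K : fieldType) (n : nat) (D1 D2 : op K n) : Prop :=
  exists (s : seq (op K n)), forall A, lie_word D1 D2 A ->
    exists c : nat -> K, forall f, A f = \sum_(i < size s) c i *: (nth id s i) f.

Definition non_proportional (K : fieldType) (n : nat) (beta gamma : 'I_n -> K) :=
  forall a b : K, (forall j, a * beta j + b * gamma j = 0) -> a = 0 /\ b = 0.

Definition pairing (K : fieldType) (n : nat) (beta : 'I_n -> K) (u : 'I_n -> nat) : K :=
  \sum_(i < n) beta i * (u i)%:R.

(* Main.v *)
Require Import Defs.
From HB Require Import structures.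
From mathcomp Require Import all_boot all_order all_algebra.
From mathcomp Require Import mpoly.
From mathcomp Require Import ring zify.
From Stdlib Require Import ClassicalEpsilon.
Set Implicit Arguments. Unset Strict Implicit.
Import GRing.Theory.
Local Open Scope ring_scope.

Section Aux.
Variables (K : fieldType) (n : nat).

Definition pair (d : 'I_n -> K) (u : 'X_{1..n}) : K := \sum_(i < n) d i * (u i)%:R.

Lemma XdX (j : 'I_n) (u : 'X_{1..n}) :
  'X_j * ('X_[u] : {mpoly K[n]})^`M(j) = (u j)%:R *: 'X_[u].
Proof.
rewrite mderivX -scalerAr -mpolyXD.
have [->|nz] := eqVneq (u j) 0%N; first by rewrite !scale0r.
congr (_ *: 'X_[_]); rewrite addmC submK //; apply/mnm_lepP => l; rewrite mnm1E.
by case: (j =P l) nz => // ->; rewrite -lt0n.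
Qed.

Lemma Delta_mono (p : 'X_{1..n}) (beta : 'I_n -> K) c u :
  Delta p beta (c *: 'X_[u]) = (c * pair beta u) *: 'X_[u + p].
Proof.
rewrite /Delta.
under eq_bigr => j _ do rewrite mderivZ -scalerAr XdX !scalerA.
rewrite -scaler_suml -scalerAr -mpolyXD addmC; congr (_ *: _).
rewrite /pair mulr_sumr; apply: eq_bigr => i _; ring.
Qed.

Lemma pairD d u v : pair d (u + v)%MM = pair d u + pair d v.
Proof. by rewrite /pair -big_split; apply: eq_bigr => i _; rewrite mnmDE natrD mulrDr. Qed.

Lemma pairU d j : pair d U_(j)%MM = d j.
Proof.
rewrite /pair (bigD1 j) //= mnm1E eqxx mulr1 big1 ?addr0 // => i ne.
by rewrite mnm1E eq_sym (negbTE ne) mulr0.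
Qed.

End Aux.

Theorem lemma5 (K : fieldType) (n : nat) (hK : [pchar K] =i pred0)
  (p q : 'X_{1..n}) (hp : p != 0%MM) (hq : q != 0%MM)
  (beta gamma : 'I_n -> K) (hbg : non_proportional beta gamma) :
  gen_lie_fin_dim (Delta p beta) (Delta q gamma) ->
  exists r : nat, pairing beta (fun i => (r * p i + q i)%N) = 0.
Proof.
move=> [s Hs].
apply: NNPP => Hno.
have H : forall r : nat, pairing beta (fun i => (r * p i + q i)%N) != 0.
  by move=> r; apply/eqP => E; apply: Hno; exists r.
pose m := fix m (k : nat) : 'X_{1..n} := if k is k'.+1 then (m k' + p)%MM else q.
pose dl := fix dl (k : nat) : 'I_n -> K := if k is k'.+1 then
   (fun j => pair beta (m k') * dl k' j - pair (dl k') p * beta j) else gamma.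
pose A := fix A (k : nat) : op K n := if k is k'.+1 then
   lie_br (Delta p beta) (A k') else Delta q gamma.
have lwA : forall k, lie_word (Delta p beta) (Delta q gamma) (A k).
  elim=> [|k IH] /=; first exact: lw_right.
  by apply: lw_br => //; apply: lw_left.
have Amono : forall k c u, A k (c *: 'X_[u]) = (c * pair (dl k) u) *: 'X_[u + m k].
  elim=> [|k IH] c u /=; first exact: Delta_mono.
  rewrite /lie_br IH !Delta_mono IH.
  have -> : (u + m k + p = u + (m k + p))%MM by rewrite addmA.
  have -> : (u + p + m k = u + (m k + p))%MM by rewrite -addmA [(p + _)%MM]addmC.
  rewrite -scalerBl; congr (_ *: _).
  have -> : pair (fun j => pair beta (m k) * dl k j - pair (dl k) p * beta j) u
      = pair beta (m k) * pair (dl k) u - pair (dl k) p * pair beta u.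
    rewrite /pair !mulr_sumr -sumrB; apply: eq_bigr => i _; ring.
  rewrite !pairD; ring.
have mE : forall k i, m k i = (k * p i + q i)%N.
  elim=> [|k IH] i /=; first by rewrite mul0n.
  by rewrite mnmDE IH mulSn; lia.
have mdegE : forall k, mdeg (m k) = (mdeg q + k * mdeg p)%N.
  elim=> [|k IH] /=; first by rewrite mul0n addn0.
  by rewrite mdegD IH mulSn; lia.
have dlE : forall k, exists a b, a != 0 /\ forall j, dl k j = a * gamma j + b * beta j.
  elim=> [|k [a [b [a0 Hab]]]].
    by exists 1, 0; split => [|j /=]; [exact: oner_neq0 | ring].
  exists (pair beta (m k) * a), (pair beta (m k) * b - pair (dl k) p); split.
    rewrite mulf_neq0 //.
    have -> : pair beta (m k) = pairing beta (fun i => (k * p i + q i)%N).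
      by rewrite /pair /pairing; apply: eq_bigr => i _; rewrite mE.
    exact: H.
  by move=> j /=; rewrite Hab; ring.
have Hex : forall k, exists j, dl k j != 0.
  move=> k; apply: NNPP => Hn.
  have [a [b [a0 Hab]]] := dlE k.
  have [_ /eqP] : b = 0 /\ a = 0.
    apply: hbg => j; rewrite addrC -Hab.
    by case: (eqVneq (dl k j) 0) => // ne; exfalso; apply: Hn; exists j.
  by rewrite (negbTE a0).
pose jf k := proj1_sig (constructive_indefinite_description _ (Hex k)).
have jfP : forall k, dl k (jf k) != 0.
  by move=> k; rewrite /jf; case: constructive_indefinite_description.
pose cf k := proj1_sig (constructive_indefinite_description _ (Hs _ (lwA k))).
have cfP : forall k f, A k f = \sum_(i < size s) cf k i *: (nth id s i) f.
  by move=> k; rewrite /cf; case: constructive_indefinite_description.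
set N := size s in cfP.
pose col (l : nat) := (U_(jf l) + m l)%MM.
pose M := \matrix_(k < N.+1, l < N.+1) (A k ('X_(jf l)))@_(col l).
pose C := \matrix_(k < N.+1, i < N) cf k i.
pose W := \matrix_(i < N, l < N.+1) (nth id s i ('X_(jf l)))@_(col l).
have MCW : M = C *m W.
  apply/matrixP => k l; rewrite !mxE cfP raddf_sum; apply: eq_bigr => i _.
  rewrite !mxE; exact: mcoeffZ.
have Mkl : forall k l : 'I_N.+1, M k l = if k == l then dl k (jf k) else 0.
  move=> k l; rewrite mxE -[('X_(jf l))]scale1r Amono mcoeffZ mcoeffX mul1r /col.
  have [<-|kl] := eqVneq k l; first by rewrite eqxx pairU mulr1.
  case: eqP => [E|_]; last by rewrite mulr0.
  exfalso; move/eqP: kl; apply.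
  have := congr1 mdeg E; rewrite !mdegD !mdeg1 !mdegE => /eqP.
  rewrite !eqn_add2l eqn_mul2r mdeg_eq0 (negbTE hp) /= => /eqP.
  by move=> /val_inj.
have Mdiag : M = diag_mx (\row_k dl k (jf k)).
  apply/matrixP => a b; rewrite Mkl !mxE.
  by case: eqP => [->|]; rewrite ?mulr1n ?mulr0n.
have Munit : M \in unitmx.
  rewrite unitmxE Mdiag det_diag unitfE; apply/prodf_neq0 => i _.
  by rewrite mxE.
have := mxrank_unit Munit; rewrite MCW => Hr.
have := leq_trans (mxrankM_maxl C W) (rank_leq_col C).
by rewrite Hr ltnn.
Qed.
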